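(* Let $z$ be an indeterminate and $c=1+(q-1)z$. For every $n\ge0$, $$\frac{1}{z}\int_0^z\beta_n(y)\,dy=\frac{1}{(q-1)^n}\sum_{k=0}^{n}\binom{n}{k}(-1)^{n-k}\frac{[k+1]_c}{[k+1]_q}.$$
   Context: $q$ is an indeterminate. The $q$-Bernoulli–Carlitz numbers $\beta_n\in\mathbb{Q}(q)$ are defined by: for all $n\ge0$, $q\sum_{k=0}^{n}\binom{n}{k}q^k\beta_k-\beta_n$ equals $q-1$ if $n=0$, $1$ if $n=1$, and $0$ if $n>1$. Let $\Psi$ be the $\mathbb{Q}(q)$-linear form on $\mathbb{Q}(q)[x]$ with $\Psi(x^n)=\beta_n$, extended $\mathbb{Q}(q)[z]$-linearly to $\mathbb{Q}(q)[z][x]$. The $q$-Bernoulli–Carlitz polynomials are $\beta_n(z)=\Psi\big((z+(z(q-1)+1)x)^n\big)\in\mathbb{Q}(q)[z]$, and $\int_0^z\beta_n(y)\,dy$ is the ordinary integral of this polynomial. $[m]_q=(q^m-1)/(q-1)$ and $[m]_c=(c^m-1)/(c-1)=1+c+\dots+c^{m-1}$. *)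

(* Defs.v *)
From HB Require Import structures.
From mathcomp Require Import all_boot all_order all_algebra.
Set Implicit Arguments. Unset Strict Implicit. Unset Printing Implicit Defensive.
Import Order.TTheory GRing.Theory Num.Theory.
Local Open Scope ring_scope.

Definition Qq : fieldType := {fraction {poly rat}}.
Definition qv : Qq := FracField.tofrac ('X : {poly rat}).

Definition qint (m : nat) : Qq := (qv ^+ m - 1) / (qv - 1).

Definition cint (c : {poly Qq}) (m : nat) : {poly Qq} := \sum_(i < m) c ^+ i.

Definition is_qBC (beta : nat -> Qq) : Prop :=
  forall n : nat,
    qv * (\sum_(k < n.+1) (qv ^+ k *+ 'C(n, k)) * beta k) - beta n
    = (if n == 0%N then qv - 1 else if n == 1%N then 1 else 0).

(* Psi : Q(q)[z][x] -> Q(q)[z], Q(q)[z]-linear with Psi(x^n) = beta_n *)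
Definition Psi (beta : nat -> Qq) (P : {poly {poly Qq}}) : {poly Qq} :=
  \sum_(i < size P) P`_i * (beta i)%:P.

Definition cz : {poly Qq} := 1 + (qv - 1) *: 'X.

Definition betapoly (beta : nat -> Qq) (n : nat) : {poly Qq} :=
  Psi beta ((('X : {poly Qq})%:P + (cz)%:P * 'X) ^+ n).

Definition prim (p : {poly Qq}) : {poly Qq} :=
  \poly_(i < (size p).+1) (match i with 0%N => 0 | j.+1 => p`_j / (j.+1)%:R end).

(* Main.v *)
Require Import Defs.
From HB Require Import structures.
From mathcomp Require Import all_boot all_order all_algebra.
From mathcomp Require Import ring.
Import GRing.Theory.
Import Num.Theory.
Local Open Scope ring_scope.
Definition gpsi {R : comNzRingType} (b : nat -> R) (p : {poly R}) : R :=
  \sum_(i < size p) p`_i * b i.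

Lemma gpsiE {R : comNzRingType} (b : nat -> R) (p : {poly R}) N :
  (size p <= N)%N -> gpsi b p = \sum_(i < N) p`_i * b i.
Proof.
move=> H; rewrite /gpsi (big_ord_widen N (fun i => p`_i * b i) H) big_mkcond /=.
apply: eq_bigr => i _; case: ifP => // /negbT; rewrite -leqNgt => Hi.
by rewrite nth_default // mul0r.
Qed.

Lemma gpsiD {R : comNzRingType} (b : nat -> R) (p q : {poly R}) :
  gpsi b (p + q) = gpsi b p + gpsi b q.
Proof.
rewrite (gpsiE b _ (maxn (size p) (size q))) ?size_polyD //.
rewrite (gpsiE b p (maxn (size p) (size q))) ?leq_maxl //.
rewrite (gpsiE b q (maxn (size p) (size q))) ?leq_maxr //.
by rewrite -big_split /=; apply: eq_bigr => i _; rewrite coefD mulrDl.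
Qed.

Lemma gpsiZ {R : comNzRingType} (b : nat -> R) (a : R) (p : {poly R}) :
  gpsi b (a *: p) = a * gpsi b p.
Proof.
rewrite (gpsiE b _ (size p)) ?size_scale_leq // (gpsiE b p (size p)) // mulr_sumr.
by apply: eq_bigr => i _; rewrite coefZ mulrA.
Qed.

Lemma gpsi0 {R : comNzRingType} (b : nat -> R) : gpsi b 0 = 0.
Proof. by rewrite /gpsi size_poly0 big_ord0. Qed.

Lemma gpsi_sum {R : comNzRingType} (b : nat -> R) I (r : seq I) (P : pred I) F :
  gpsi b (\sum_(i <- r | P i) F i) = \sum_(i <- r | P i) gpsi b (F i).
Proof. exact: (big_morph _ (gpsiD b) (gpsi0 b)). Qed.

Lemma gpsiXn {R : comNzRingType} (b : nat -> R) n : gpsi b 'X^n = b n.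
Proof.
rewrite /gpsi size_polyXn big_ord_recr /= coefXn eqxx mul1r big1 ?add0r //.
by move=> i _; rewrite coefXn (ltn_eqF (ltn_ord i)) mul0r.
Qed.

Lemma gpsi_lin0 {R : comNzRingType} (L : {poly R} -> R)
  (LD : forall p q, L (p + q) = L p + L q) (LZ : forall a p, L (a *: p) = a * L p)
  (LX : forall n, L 'X^n = 0) p : L p = 0.
Proof.
have L0 : L 0 = 0 by rewrite -(scale0r 0) LZ mul0r.
rewrite -[p]coefK poly_def (big_morph _ LD L0) big1 // => i _.
by rewrite LZ LX mulr0.
Qed.
Definition uu : {poly Qq} := 1 + qv *: 'X.
Definition vv : {poly Qq} := 1 + (qv - 1) *: 'X.

Lemma rec_Xn beta (hb : is_qBC beta) n :
  qv * gpsi beta ('X^n \Po uu) - gpsi beta 'X^n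
  = (qv - 1) * ('X^n).[0] + (('X^n)^`()).[0].
Proof.
rewrite comp_Xn_poly gpsiXn /uu exprDn.
under eq_bigr => i _ do rewrite expr1n mul1r exprZn scalerMnl.
rewrite gpsi_sum.
under eq_bigr => i _ do rewrite gpsiZ gpsiXn.
rewrite hb derivXn hornerMn !hornerXn.
case: n => [|[|n]] /=; rewrite ?expr0n ?mulr1 ?mulr0 ?addr0 ?add0r //=.
by rewrite mul0rn.
Qed.

Lemma auxD (R : comNzRingType) (qv A B C D E F G H : R) :
  qv * (A + B) - (C + D) - ((qv - 1) * (E + F) + (G + H)) =
  qv * A - C - ((qv - 1) * E + G) + (qv * B - D - ((qv - 1) * F + H)).
Proof. ring. Qed.
Lemma auxZ (R : comNzRingType) (qv a A C E G : R) :
  qv * (a * A) - a * C - ((qv - 1) * (a * E) + a * G) =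
  a * (qv * A - C - ((qv - 1) * E + G)).
Proof. ring. Qed.

Lemma rec_all beta (hb : is_qBC beta) p :
  qv * gpsi beta (p \Po uu) - gpsi beta p = (qv - 1) * p.[0] + (p^`()).[0].
Proof.
apply/eqP; rewrite -subr_eq0; apply/eqP.
pose L q := qv * gpsi beta (q \Po uu) - gpsi beta q - ((qv - 1) * q.[0] + (q^`()).[0]).
apply: (@gpsi_lin0 _ L) => [q r|a q|n]; rewrite /L.
- rewrite comp_polyD !gpsiD hornerD derivD hornerD. exact: auxD.
- rewrite comp_polyZ !gpsiZ hornerZ derivZ hornerZ. exact: auxZ.
- by rewrite rec_Xn // subrr.
Qed.
Lemma comp_polyXn_gen (p q : {poly Qq}) k : (p ^+ k) \Po q = (p \Po q) ^+ k.
Proof.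
elim: k => [|k IH]; first by rewrite !expr0 -polyC1 comp_polyC.
by rewrite !exprS comp_polyM IH.
Qed.

Lemma auxV (R : comNzRingType) (Q X : R) :
  1 + (Q - 1) * (1 + Q * X) = Q * (1 + (Q - 1) * X).
Proof. ring. Qed.

Lemma vv_comp : vv \Po uu = qv *: vv.
Proof.
rewrite /vv /uu comp_polyD comp_polyZ comp_polyX -polyC1 comp_polyC.
rewrite -!mul_polyC polyCB !polyC1. exact: (@auxV _ qv%:P 'X).
Qed.

Lemma vv_deriv : vv^`() = (qv - 1)%:P.
Proof. by rewrite /vv derivD -polyC1 derivC derivZ derivX add0r -mul_polyC mulr1. Qed.

Lemma vv0 : vv.[0] = 1.
Proof. by rewrite /vv hornerD hornerZ hornerX -polyC1 hornerC mulr0 addr0. Qed.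

Lemma gamma_eq beta (hb : is_qBC beta) k :
  (qv ^+ k.+1 - 1) * gpsi beta (vv ^+ k) = (qv - 1) * k.+1%:R.
Proof.
have := rec_all _ hb (vv ^+ k).
rewrite comp_polyXn_gen vv_comp exprZn gpsiZ horner_exp vv0 deriv_exp vv_deriv.
rewrite hornerMn hornerM horner_exp vv0 hornerC !expr1n !mulr1.
by rewrite exprS mulrBl mul1r mulrA mulr_natr mulrS.
Qed.

Lemma gpsiC {R : comNzRingType} (b : nat -> {poly R}) (c : {poly R}) (P : {poly {poly R}}) :
  gpsi b (c%:P * P) = c * gpsi b P.
Proof. by rewrite mul_polyC gpsiZ. Qed.

Lemma gpsi_mapC {R : comNzRingType} (b : nat -> R) (p : {poly R}) :
  gpsi (fun i => (b i)%:P) (p^:P) = (gpsi b p)%:P.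
Proof.
rewrite /gpsi size_map_polyC rmorph_sum /=; apply: eq_bigr => i _.
by rewrite coef_map /= rmorphM.
Qed.

Lemma auxT (R : comNzRingType) (a b c : R) m i :
  (a * (b * c) ^+ i) *+ m = (a *+ m * b ^+ i) * c ^+ i.
Proof. by rewrite exprMn mulrA !mulrnAl. Qed.

Lemma auxB (R : comNzRingType) (A Y x : R) :
  A * (Y + (1 + A * Y) * x) = -1 + (1 + A * Y) * (1 + A * x).
Proof. ring. Qed.

Lemma auxT2 {R : comNzRingType} (c : {poly R}) (V : {poly {poly R}}) k i m :
  ((-1) ^+ k * (c%:P * V) ^+ i) *+ m = ((((-1) ^+ k *+ m : R) *: c ^+ i)%:P) * V ^+ i.
Proof.
rewrite auxT -mul_polyC polyCM polyCMn rmorphXn /= polyCN polyC1 rmorphXn /=.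
by rewrite polyCMn rmorphXn /= polyCN polyC1.
Qed.

Lemma auxF {R : comNzRingType} (s g : R) (c : {poly R}) :
  (s *: c) * g%:P = (s * g) *: c.
Proof. by rewrite -!mul_polyC polyCM mulrAC. Qed.

Lemma key_lin :
  ((qv - 1)%:P)%:P * (('X : {poly Qq})%:P + cz%:P * 'X) = -1 + cz%:P * vv^:P.
Proof.
have -> : cz%:P = 1 + ((qv - 1)%:P)%:P * ('X : {poly Qq})%:P.
  by rewrite /cz (@polyCD _ 1 ((qv - 1) *: 'X)) polyC1 -mul_polyC polyCM.
have -> : vv^:P = 1 + ((qv - 1)%:P)%:P * 'X.
  by rewrite /vv raddfD /= rmorph1 map_polyZ map_polyX /= -mul_polyC.
exact: (@auxB _ ((qv - 1)%:P)%:P ('X : {poly Qq})%:P 'X).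
Qed.

Lemma betapoly_expand beta n :
  (qv - 1) ^+ n *: betapoly beta n =
  \sum_(i < n.+1) (((-1) ^+ (n - i) *+ 'C(n, i)) * gpsi beta (vv ^+ i)) *: cz ^+ i.
Proof.
change (betapoly beta n) with
  (gpsi (fun i => (beta i)%:P) ((('X : {poly Qq})%:P + cz%:P * 'X) ^+ n)).
rewrite -mul_polyC -gpsiC !rmorphXn /= -exprMn key_lin exprDn gpsi_sum.
apply: eq_bigr => i _.
rewrite auxT2 -rmorphXn gpsiC gpsi_mapC.
exact: auxF.
Qed.
Lemma natr_neq0 m : (m.+1)%:R != 0 :> Qq.
Proof.
have -> : (m.+1)%:R = FracField.tofrac ((m.+1)%:R : {poly rat}) :> Qq.
  by rewrite rmorph_nat.
rewrite tofrac_eq0 -polyC_natr polyC_eq0.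
by rewrite pnatr_eq0.
Qed.

Lemma qvX1_neq0 m : qv ^+ m.+1 - 1 != 0.
Proof.
rewrite /qv -tofracXn -tofrac1 -tofracB tofrac_eq0.
by rewrite -size_poly_eq0 size_Xn_sub_1.
Qed.

Lemma qv1_neq0 : qv - 1 != 0.
Proof. by have := qvX1_neq0 0; rewrite expr1. Qed.

Lemma prim_uniq p r : r^`() = p -> r.[0] = 0 -> prim p = r.
Proof.
move=> Hd H0; apply/polyP => i; rewrite coef_poly.
case: i => [|j] /=; first by move: H0; rewrite (horner_coef0 r) => ->.
have Hj : r`_j.+1 = p`_j / (j.+1)%:R.
  rewrite -Hd coef_deriv -(mulr_natr r`_j.+1) mulfK //; exact: natr_neq0.
rewrite Hj; case: ifP => // /negbT; rewrite ltnS -leqNgt => Hs.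
by rewrite nth_default // mul0r.
Qed.

Lemma auxC (R : comNzRingType) (w c : R) : w - 1 + (c - 1) * w = c * w - 1.
Proof. ring. Qed.

Lemma cint_X m : (qv - 1) *: ('X * cint cz m) = cz ^+ m - 1.
Proof.
elim: m => [|m IH]; first by rewrite /cint big_ord0 mulr0 scaler0 expr0 subrr.
rewrite /cint big_ord_recr /= -/(cint cz m) mulrDr scalerDr IH.
rewrite scalerAl exprS.
have -> : (qv - 1) *: 'X = cz - 1 by rewrite /cz addrAC subrr add0r.
move: (cz ^+ m) => w; move: cz => c.
exact: auxC.
Qed.

Lemma deriv_Xcint k : ('X * cint cz k.+1)^`() = (k.+1)%:R *: cz ^+ k.
Proof.
apply: (scalerI qv1_neq0).
rewrite -derivZ cint_X derivB -polyC1 derivC subr0 deriv_exp.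
have -> : cz^`() = (qv - 1)%:P by rewrite /cz derivD derivC derivZ derivX add0r -mul_polyC mulr1.
by rewrite /= mul_polyC scaler_nat scalerMnr.
Qed.

Lemma auxG (F : fieldType) (a b c g : F) :
  b != 0 -> c != 0 -> b * g = c * a -> g = a / (b / c).
Proof. move=> hb hc H; rewrite invf_div mulrA -(mulrC c) -H mulrC mulKf //. Qed.

Lemma gammaE beta (hb : is_qBC beta) k :
  gpsi beta (vv ^+ k) = (k.+1)%:R / qint k.+1.
Proof.
rewrite /qint; apply: auxG; [exact: qvX1_neq0 | exact: qv1_neq0 | exact: gamma_eq].
Qed.

Lemma auxM (R : comNzRingType) (s i a : R) : s * i * a = s * (a * i).
Proof. ring. Qed.

Theorem mainTheorem5 (beta : nat -> Qq) (hbeta : is_qBC beta) (n : nat) :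
  prim (betapoly beta n) =
  'X * (((qv - 1) ^+ n)^-1 *:
        \sum_(k < n.+1) ((((-1) ^+ (n - k) *+ 'C(n, k)) / qint k.+1) *: cint cz k.+1)).
Proof.
have hA : (qv - 1) ^+ n != 0 by rewrite expf_neq0 // qv1_neq0.
apply: prim_uniq; last by rewrite hornerM hornerX mul0r.
apply: (scalerI hA); rewrite betapoly_expand -scalerAr derivZ scalerA mulfV // scale1r.
rewrite mulr_sumr linear_sum /=; apply: eq_bigr => k _.
rewrite -scalerAr derivZ deriv_Xcint scalerA gammaE //.
congr (_ *: _); exact: auxM.
Qed.
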